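(* Let $\mu$ be a smooth volume form on $S^2$ and let $G$ be an abelian pseudo-rotation subgroup of $\mathrm{Symp}^\infty_\mu(S^2)$. Then either $\mathrm{Fix}(g)$ is the same set for every non-trivial $g\in G$, or $G$ is isomorphic to $\mathbb{Z}/2\mathbb{Z}\oplus\mathbb{Z}/2\mathbb{Z}$. In the latter case the fixed point sets of the non-trivial elements of $G$ are pairwise disjoint, so their union contains six points.
   Context: $\mathrm{Symp}^\infty_\mu(S^2)$ is the group of $C^\infty$ diffeomorphisms of $S^2$ isotopic to the identity and preserving $\mu$. A subgroup is a pseudo-rotation group if every non-trivial element has exactly $2$ fixed points. *)

(* Defs.v *)
(* S^2 is the Euclidean unit sphere in R^3 = 'rV[R]_3. *)
From HB Require Import structures.
From mathcomp Require Import all_boot all_order all_algebra.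
From mathcomp Require Import all_classical all_reals all_analysis.
Set Implicit Arguments. Unset Strict Implicit. Unset Printing Implicit Defensive.
Import Order.TTheory GRing.Theory Num.Theory.
Import numFieldNormedType.Exports.
Local Open Scope classical_set_scope.
Local Open Scope ring_scope.

Section Sphere.
Variable R : realType.

Definition dot3 (x y : 'rV[R]_3) : R := (x *m y^T) 0 0.

Definition on_sphere (x : 'rV[R]_3) : bool := dot3 x x == 1.
Definition S2 := {x : 'rV[R]_3 | on_sphere x}.
Definition sphere_set : set 'rV[R]_3 := [set x | on_sphere x].

Definition e3 (i : 'I_3) : 'rV[R]_3 := delta_mx 0 i.

Fixpoint iter_partial {W : normedModType R} (l : seq 'I_3)
  (F : 'rV[R]_3 -> W) : 'rV[R]_3 -> W :=
  match l with
  | [::] => F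
  | i :: l' => fun x => 'D_(e3 i) (iter_partial l' F) x
  end.

Definition smooth_on {W : normedModType R} (U : set 'rV[R]_3)
  (F : 'rV[R]_3 -> W) : Prop :=
  open U /\
  forall l : seq 'I_3,
    {within U, continuous (iter_partial l F)} /\
    (forall (i : 'I_3) x, U x -> derivable (iter_partial l F) x (e3 i)).

Definition smooth_ext (f : S2 -> S2) (F : 'rV[R]_3 -> 'rV[R]_3) : Prop :=
  exists U, sphere_set `<=` U /\ smooth_on U F /\
            forall x : S2, val (f x) = F (val x).

Definition smooth_map (f : S2 -> S2) : Prop := exists F, smooth_ext f F.

Definition diffeo (f : S2 -> S2) : Prop :=
  smooth_map f /\ exists g : S2 -> S2, smooth_map g /\ cancel f g /\ cancel g f.

Definition isotopic_to_id (f : S2 -> S2) : Prop :=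
  exists H : R -> S2 -> S2,
    (forall t, 0 <= t <= 1 -> diffeo (H t)) /\
    H 0 = id /\ H 1 = f /\
    (forall t0 (x0 : S2), 0 <= t0 <= 1 -> forall eps : R, 0 < eps ->
       exists2 delta : R, 0 < delta &
         forall t (x : S2), 0 <= t <= 1 -> `|t - t0| < delta ->
           `|val x - val x0| < delta ->
           `|val (H t x) - val (H t0 x0)| < eps).

Definition det3 (x u v : 'rV[R]_3) : R :=
  \det (\matrix_(i < 3, j < 3)
          (if i == 0 then x 0 j else if i == 1 then u 0 j else v 0 j)).

Definition tangent (x u : 'rV[R]_3) : Prop := dot3 x u = 0.

(* A smooth 2-form on S^2 is  mu_x(u,v) = rho(x) * det(x,u,v)  for u,v tangent
   at x, with rho smooth; it is a volume form iff rho vanishes nowhere on S^2. *)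
Definition volume_form (rho : 'rV[R]_3 -> R) : Prop :=
  (exists U, sphere_set `<=` U /\ smooth_on U rho) /\
  (forall x, on_sphere x -> rho x != 0).

Definition preserves_form (rho : 'rV[R]_3 -> R) (f : S2 -> S2) : Prop :=
  exists F, smooth_ext f F /\
    forall (x : S2) (u v : 'rV[R]_3), tangent (val x) u -> tangent (val x) v ->
      rho (val (f x)) * det3 (val (f x)) ('D_u F (val x)) ('D_v F (val x))
      = rho (val x) * det3 (val x) u v.

Definition Symp (rho : 'rV[R]_3 -> R) : set (S2 -> S2) :=
  [set f | diffeo f /\ isotopic_to_id f /\ preserves_form rho f].

Definition Fix (g : S2 -> S2) : set S2 := [set x | g x = x].

Definition is_subgroup (rho : 'rV[R]_3 -> R) (G : set (S2 -> S2)) : Prop :=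
  G `<=` Symp rho /\ G id /\
  (forall g h, G g -> G h -> G (g \o h)) /\
  (forall g, G g -> exists2 h, G h & g \o h = id /\ h \o g = id).

Definition abelian_set (G : set (S2 -> S2)) : Prop :=
  forall g h, G g -> G h -> g \o h = h \o g.

Definition pseudo_rotation_set (G : set (S2 -> S2)) : Prop :=
  forall g, G g -> g <> id ->
    exists a b : S2, a <> b /\ Fix g = [set a; b].

Definition iso_Z2xZ2 (G : set (S2 -> S2)) : Prop :=
  exists phi : bool * bool -> (S2 -> S2),
    injective phi /\ range phi = G /\
    forall a b : bool * bool,
      phi (a.1 (+) b.1, a.2 (+) b.2) = phi a \o phi b.

End Sphere.

(* Main.v *)
Require Import Defs.
From HB Require Import structures.
From mathcomp Require Import all_boot all_order all_algebra.
From mathcomp Require Import all_classical all_reals all_analysis.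
Import Order.TTheory GRing.Theory Num.Theory.
Import numFieldNormedType.Exports.
Local Open Scope classical_set_scope.
Lemma gen (T : Type) (G : set (T -> T)) :
  G id -> (forall g h, G g -> G h -> G (g \o h)) ->
  (forall g, G g -> exists2 h, G h & g \o h = id /\ h \o g = id) ->
  (forall g h, G g -> G h -> g \o h = h \o g) ->
  (forall g, G g -> g <> id -> exists a b : T, a <> b /\ [set x | g x = x] = [set a; b]) ->
  (forall g h, G g -> G h -> g <> id -> h <> id -> [set x | g x = x] = [set x | h x = x]) \/
  ((exists phi : bool * bool -> (T -> T), injective phi /\ range phi = G /\
     forall a b : bool * bool, phi (a.1 (+) b.1, a.2 (+) b.2) = phi a \o phi b) /\
   forall g h, G g -> G h -> g <> id -> h <> id -> g <> h ->
     [set x | g x = x] `&` [set x | h x = x] = set0).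
Proof.
move=> Hid Hc Hinv Hab Hps.
have inj : forall g, G g -> injective g.
  move=> g /Hinv [g' _ [_ E]] x y e.
  have := congr1 (fun f => f x) E; have := congr1 (fun f => f y) E => /= <- <-.
  by rewrite e.
have fixP : forall (g : T -> T) (a b : T), [set x | g x = x] = [set a; b] ->
    forall x, g x = x <-> x = a \/ x = b.
  move=> g a b E x; have := congr1 (fun S : set T => S x) E => /= ->.
  exact: iff_refl.
have three : forall (m : T -> T) (a b c : T), G m -> m a = a -> m b = b -> m c = c ->
    a <> b -> a <> c -> b <> c -> m = id.
  move=> m a b c Gm ma mb mc ab ac bc.
  case: (pselect (m = id)) => // nm.
  case: (Hps m Gm nm) => p [q [pq E]]; have P := fixP _ _ _ E.
  case: (proj1 (P a) ma) => Ha; case: (proj1 (P b) mb) => Hb;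
    case: (proj1 (P c) mc) => Hc'; congruence.
have swap : forall (k : T -> T) (a b : T) (h : T -> T), G k -> G h -> a <> b ->
    [set x | k x = x] = [set a; b] ->
    (h a = a /\ h b = b) \/ (h a = b /\ h b = a).
  move=> k a b h Gk Gh ab E; have P := fixP _ _ _ E.
  have st : forall x, k x = x -> k (h x) = h x.
    by move=> x kx; have := congr1 (fun f => f x) (Hab k h Gk Gh); rewrite /= kx.
  have injh := inj h Gh.
  case: (proj1 (P _) (st a (proj2 (P a) (or_introl erefl)))) => ha;
  case: (proj1 (P _) (st b (proj2 (P b) (or_intror erefl)))) => hb.
  - by exfalso; apply: ab; apply: injh; rewrite ha hb.
  - by left.
  - by right.
  - by exfalso; apply: ab; apply: injh; rewrite ha hb.
have swapped : forall (g h : T -> T) (a b : T), G g -> G h -> h <> id -> a <> b ->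
    [set x | g x = x] = [set a; b] ->
    [set x | g x = x] <> [set x | h x = x] -> h a = b /\ h b = a.
  move=> g h a b Gg Gh nh ab E D; have P := fixP _ _ _ E.
  case: (swap g a b h Gg Gh ab E) => // [[ha hb]].
  exfalso; apply: D; rewrite predeqE => x /=; split.
    by case/P => ->.
  move=> hx; case: (pselect (g x = x)) => // gx; exfalso; apply: nh.
  apply: (three h a b x) => //.
  - by move=> e; apply: gx; rewrite -e; apply/P; left.
  - by move=> e; apply: gx; rewrite -e; apply/P; right.
case: (pselect (forall g h, G g -> G h -> g <> id -> h <> id ->
   [set x | g x = x] = [set x | h x = x])) => [H|H]; [by left|right].
have [g [h [Gg [Gh [ng [nh Fgh]]]]]] : exists g h, G g /\ G h /\ g <> id /\
   h <> id /\ [set x | g x = x] <> [set x | h x = x].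
  apply: contrapT => C; apply: H => g h Gg Gh ng nh; apply: contrapT => D.
  by apply: C; exists g, h.
case: (Hps g Gg ng) => a [b [ab Eg]]; have Pg := fixP _ _ _ Eg.
case: (Hps h Gh nh) => c [d [cd Eh]]; have Ph := fixP _ _ _ Eh.
have [ha hb] := swapped g h a b Gg Gh nh ab Eg Fgh.
have [gc gd] : g c = d /\ g d = c.
  by apply: (swapped h g c d) => // e; apply: Fgh.
have ga : g a = a by apply/Pg; left.
have gb : g b = b by apply/Pg; right.
have hc : h c = c by apply/Ph; left.
have hd : h d = d by apply/Ph; right.
have ca : c <> a by move=> e; apply: ab; rewrite -ha -e hc e.
have cb : c <> b by move=> e; apply: ab; rewrite -hb -e hc e.
have da : d <> a by move=> e; apply: ab; rewrite -ha -e hd e.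
have db : d <> b by move=> e; apply: ab; rewrite -hb -e hd e.
have hh : forall x : T, h (h x) = x.
  move=> x; have := congr1 (fun f => f x)
    (three (h \o h) a b c (Hc _ _ Gh Gh) _ _ _ ab (nesym ca) (nesym cb)).
  by apply => /=; rewrite ?ha ?hb ?hc.
have gg : forall x : T, g (g x) = x.
  move=> x; have := congr1 (fun f => f x)
    (three (g \o g) c d a (Hc _ _ Gg Gg) _ _ _ cd ca da).
  by apply => /=; rewrite ?gc ?gd ?ga.
have gh : forall x : T, g (h x) = h (g x).
  by move=> x; have := congr1 (fun f => f x) (Hab g h Gg Gh).
have injg := inj g Gg.
pose phi := fun p : bool * bool =>
  (if p.1 then g else id) \o (if p.2 then h else id).
have Hr : range phi = G.
  apply/seteqP; split.
    by move=> _ [[[] []] _ <-]; apply: Hc => //.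
  move=> k Gk; case: (pselect (k = id)) => [->|nk].
    by exists (false, false).
  case: (swap g a b k Gg Gk ab Eg) => [[ka kb]|[ka kb]];
  case: (swap h c d k Gh Gk cd Eh) => [[kc kd]|[kc kd]].
  - by exfalso; apply: nk; exact: (three k a b c Gk ka kb kc ab (nesym ca) (nesym cb)).
  - exists (true, false) => //; apply: funext => x /=.
    have := congr1 (fun f => f x)
      (three (g \o k) a b c (Hc _ _ Gg Gk) _ _ _ ab (nesym ca) (nesym cb)).
    by rewrite /= ?ka ?kb ?kc ?ga ?gb ?gd => /(_ erefl erefl erefl) E;
      rewrite /phi /= -[in LHS]E gg.
  - exists (false, true) => //; apply: funext => x /=.
    have := congr1 (fun f => f x)
      (three (h \o k) a b c (Hc _ _ Gh Gk) _ _ _ ab (nesym ca) (nesym cb)).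
    by rewrite /= ?ka ?kb ?kc ?ha ?hb ?hc => /(_ erefl erefl erefl) E;
      rewrite /phi /= -[in LHS]E hh.
  - exists (true, true) => //; apply: funext => x /=.
    have := congr1 (fun f => f x)
      (three (g \o (h \o k)) a b c (Hc _ _ Gg (Hc _ _ Gh Gk)) _ _ _ ab
         (nesym ca) (nesym cb)).
    by rewrite /= ?ka ?kb ?kc ?ha ?hb ?hd ?ga ?gb ?gd => /(_ erefl erefl erefl) E;
      rewrite /phi /= -[in LHS]E gh gg hh.
split.
  exists phi; split; last split => //.
    move=> [[] []] [[] []] E //; exfalso;
    move: (congr1 (fun f => f a) E) (congr1 (fun f => f c) E);
    rewrite /phi /= ?ga ?gb ?ha ?hb ?hc ?hd ?gc ?gd; congruence.
  by move=> [[] []] [[] []]; apply: funext => x;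
    rewrite /phi /= ?gg ?hh // ?gh ?gg ?hh // -?gh ?gg ?hh.
have noboth : forall x : T, g x = x -> h x = x -> False.
  move=> x /Pg [] -> /Ph [] e; congruence.
move=> g' h' /[dup] Gg' + /[dup] Gh' +.
rewrite -Hr => -[p _ <-] -[q _ <-] np nq npq.
rewrite predeqE => x; split => // -[] /=.
move: np nq npq; case: p => -[] []; case: q => -[] [] //= np nq npq;
  try (by exfalso; apply: np); try (by exfalso; apply: nq);
  try (by exfalso; apply: npq).
all: move=> X Y.
all: rewrite /phi /= in X Y; apply: (noboth x);
  first [assumption | congruence | apply: injg; congruence].
Qed.

Local Open Scope ring_scope.

Theorem lemma5p9 (R : realType) (rho : 'rV[R]_3 -> R)
  (G : set (S2 R -> S2 R)) :
  volume_form rho -> is_subgroup rho G -> abelian_set G ->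
  pseudo_rotation_set G ->
  (forall g h, G g -> G h -> g <> id -> h <> id -> Fix g = Fix h) \/
  (iso_Z2xZ2 G /\
   forall g h, G g -> G h -> g <> id -> h <> id -> g <> h ->
     Fix g `&` Fix h = set0).
Proof.
move=> _ [_ [Hid [Hc Hinv]]] Hab Hps.
have := @gen _ G Hid Hc Hinv Hab Hps; exact.
Qed.
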